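(* For every integer $\ell\ge 3$, the diameter of $CK(3,\ell)$ is at most $2\ell-1$.
   Context: Let $\Sigma=\{0,1,\dots,d\}$. The cyclic Kautz digraph $CK(d,\ell)$ has as vertices all sequences $a_1\ldots a_\ell\in\Sigma^\ell$ with $a_i\neq a_{i+1}$ for $1\le i\le \ell-1$ and $a_1\neq a_\ell$, with an arc from $a_1\ldots a_\ell$ to $b_1\ldots b_\ell$ iff both are vertices and $b_i=a_{i+1}$ for $1\le i\le\ell-1$. The diameter is the maximum over ordered pairs of vertices of the directed distance. *)

(* Defs.v *)
From mathcomp Require Import all_boot.
Set Implicit Arguments. Unset Strict Implicit. Unset Printing Implicit Defensive.

(* Alphabet Sigma = {0,...,d} is 'I_d.+1; words of length l are l.-tuples. *)

Definition ck_vertex (d l : nat) (a : l.-tuple 'I_d.+1) : bool :=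
  [forall i : 'I_l, (i.+1 < l) ==> (nth ord0 a i != nth ord0 a i.+1)]
  && (head ord0 a != last ord0 a).

Definition ck_arc (d l : nat) (a b : l.-tuple 'I_d.+1) : bool :=
  [&& ck_vertex a, ck_vertex b &
      [forall i : 'I_l, (i.+1 < l) ==> (nth ord0 b i == nth ord0 a i.+1)]].

Definition ck_dist_le (d l : nat) (a b : l.-tuple 'I_d.+1) (k : nat) : Prop :=
  exists p : seq (l.-tuple 'I_d.+1),
    [/\ path (@ck_arc d l) a p, last a p = b & size p <= k].

Definition ck_diam_le (d l k : nat) : Prop :=
  forall a b : l.-tuple 'I_d.+1, ck_vertex a -> ck_vertex b -> ck_dist_le a b k.

(* Main.v *)
Require Import Defs.
From mathcomp Require Import all_boot.
From mathcomp Require Import zify.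

Set Implicit Arguments. Unset Strict Implicit. Unset Printing Implicit Defensive.

Definition avoid (x y z v : 'I_4) := [&& v != x, v != y & v != z].
Definition dist4 (x y z w : 'I_4) := [&& x != y, x != z, x != w, y != z, y != w & z != w].
Definition o0 : 'I_4 := @Ordinal 4 0 isT.
Definition o1 : 'I_4 := @Ordinal 4 1 isT.
Definition o2 : 'I_4 := @Ordinal 4 2 isT.
Definition o3 : 'I_4 := @Ordinal 4 3 isT.
Ltac fin := solve [by [] | by split].
Ltac pickw := first [exists o0; fin | exists o1; fin | exists o2; fin | exists o3; fin].
Ltac pick2 := first [exists o0; pickw | exists o1; pickw | exists o2; pickw | exists o3; pickw].

Lemma combo (x y z : 'I_4) : (exists x1 x2, [/\ x1 != x2, avoid x y z x1 & avoid x y z x2]) \/ (exists w, dist4 x y z w).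
Proof.
case: x => [[|[|[|[|x]]]] Hx] //; case: y => [[|[|[|[|y]]]] Hy] //; case: z => [[|[|[|[|z]]]] Hz] //;
 first [ right; pickw | left; pick2 ].
Qed.

Lemma dist4E x y z w : dist4 x y z w ->
  [/\ x != y, x != z, x != w & [/\ y != z, y != w & z != w]].
Proof. by move/and4P => [h1 h2 h3 /and3P[h4 h5 h6]]. Qed.

Definition Wt (l : nat) (f : nat -> 'I_4) (s : nat) : l.-tuple 'I_4 :=
  @Tuple l _ (mkseq (fun i => f (s + i)) l) (introT eqP (size_mkseq _ _)).

Lemma nth_Wt l f s i : i < l -> nth ord0 (Wt l f s) i = f (s + i).
Proof. by move=> h; rewrite /= nth_mkseq. Qed.

Lemma Wt_vertex l f s : 0 < l -> (forall i, i.+1 < l -> f (s+i) != f (s+i.+1)) ->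
  f s != f (s + l.-1) -> @ck_vertex 3 l (Wt l f s).
Proof.
move=> l0 H1 H2; apply/andP; split.
  apply/forallP => i; apply/implyP => Hi; rewrite !nth_Wt //; exact: H1.
rewrite -nth0 -nth_last size_tuple !nth_Wt ?addn0 //; lia.
Qed.

Lemma Wt_arc l f s : @ck_vertex 3 l (Wt l f s) -> ck_vertex (Wt l f s.+1) ->
  ck_arc (Wt l f s) (Wt l f s.+1).
Proof.
move=> V1 V2; apply/and3P; split=> //; apply/forallP=> i; apply/implyP=> Hi.
by rewrite !nth_Wt // addSnnS.
Qed.

Lemma walk l f m : 0 < l -> (forall p, p.+1 < m + l -> f p != f p.+1) ->
  (forall s, s <= m -> f s != f (s + l.-1)) -> @ck_dist_le 3 l (Wt l f 0) (Wt l f m) m.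
Proof.
move=> l0 H1 H2.
have V s : s <= m -> ck_vertex (Wt l f s).
  move=> hs; apply: Wt_vertex => // [i hi|]; last exact: H2.
  rewrite addnS; apply: H1; lia.
have G : forall k s0, s0 + k <= m ->
  path (@ck_arc 3 l) (Wt l f s0) [seq Wt l f s | s <- iota s0.+1 k] /\
  last (Wt l f s0) [seq Wt l f s | s <- iota s0.+1 k] = Wt l f (s0 + k).
  elim=> [|k IH] s0 hs; first by rewrite addn0.
  have [P1 P2] := IH s0.+1 ltac:(lia).
  rewrite /= P1 P2 addSnnS; split=> //; rewrite andbT; apply: Wt_arc; apply: V; lia.
have [P1 P2] := G m 0 (leqnn _).
exists [seq Wt l f s | s <- iota 1 m]; split=> //.
by rewrite size_map size_iota.
Qed.

Lemma vtx l (A : l.-tuple 'I_4) : @ck_vertex 3 l A ->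
  (forall i, i.+1 < l -> nth ord0 A i != nth ord0 A i.+1) /\ nth ord0 A 0 != nth ord0 A l.-1.
Proof.
move/andP=> [/forallP H Hl]; split.
  move=> i Hi; have Hil : i < l by lia.
  exact: (implyP (H (Ordinal Hil)) Hi).
by move: Hl; rewrite -nth0 -nth_last size_tuple.
Qed.

Lemma Wt_eq l f s (A : l.-tuple 'I_4) : (forall i, i < l -> f (s+i) = nth ord0 A i) -> Wt l f s = A.
Proof.
move=> H; apply: val_inj => /=; apply: (@eq_from_nth _ ord0).
  by rewrite size_mkseq size_tuple.
by move=> i; rewrite size_mkseq => Hi; rewrite nth_mkseq // H.
Qed.

Lemma dist_mono d l (a b : l.-tuple 'I_d.+1) m k : m <= k -> ck_dist_le a b m -> ck_dist_le a b k.
Proof. move=> hk [p [P1 P2 P3]]; exists p; split=> //; exact: leq_trans hk. Qed.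

Definition Suf (a b : nat -> 'I_4) n j (c : nat -> 'I_4) :=
  (forall i, j <= i <= n -> [&& c i != a i.+1, c i != b i & c i != c i.+1]) /\ c n.+1 = b 0.
Definition Rig (a b : nat -> 'I_4) n j (r : nat -> 'I_4) :=
  (forall i, j <= i <= n -> dist4 (a i.+1) (b i) (r i) (r i.+1)) /\ r n.+1 = b 0.
Definition upd (c : nat -> 'I_4) j x := fun i => if i == j then x else c i.

Lemma suf_ext a b n j c x : j <= n -> Suf a b n j.+1 c ->
  [&& x != a j.+1, x != b j & x != c j.+1] -> Suf a b n j (upd c j x).
Proof.
move=> Hj [H1 H2] Hx; split; last first.
  by rewrite /upd; have -> : (n.+1 == j) = false by lia.
move=> i /andP[Hji Hin]; rewrite /upd.
have -> : (i.+1 == j) = false by lia.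
case: (eqVneq i j) => [->|Hij] //; apply: H1; lia.
Qed.

Lemma rig_ext a b n j r z : j <= n -> Rig a b n j.+1 r ->
  dist4 (a j.+1) (b j) z (r j.+1) -> Rig a b n j (upd r j z).
Proof.
move=> Hj [H1 H2] Hx; split; last first.
  by rewrite /upd; have -> : (n.+1 == j) = false by lia.
move=> i /andP[Hji Hin]; rewrite /upd.
have -> : (i.+1 == j) = false by lia.
case: (eqVneq i j) => [->|Hij] //; apply: H1; lia.
Qed.

Lemma rig_suf a b n j r : Rig a b n j r -> Suf a b n j r.
Proof.
move=> [H1 H2]; split=> // i hi; have [? h2 ? [h4 ? h6]] := dist4E (H1 i hi).
by rewrite h6 andbT eq_sym h2 eq_sym h4.
Qed.

Lemma chain a b n k : k <= n.+1 -> forall z,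
  (exists c, Suf a b n (n.+1 - k) c /\ c (n.+1 - k) != z) \/
  (exists r, Rig a b n (n.+1 - k) r /\ r (n.+1 - k) = z).
Proof.
elim: k => [|k IH] hk z.
  rewrite subn0; case: (eqVneq (b 0) z) => [<-|Hz].
    right; exists (fun _ => b 0); split => //; split => // i /andP[h1 h2]; lia.
  left; exists (fun _ => b 0); split => //; split => // i /andP[h1 h2]; lia.
have ej : n.+1 - k = (n.+1 - k.+1).+1 by lia.
have jn : n.+1 - k.+1 <= n by lia.
move: (IH (ltnW hk)); rewrite ej; set j := n.+1 - k.+1 => {}IH.
case: (combo (a j.+1) (b j) z) => [[x1 [x2 [h12 /and3P[a1 a2 a3] /and3P[b1 b2 b3]]]]|[w hw]].
  case: (IH x1) => [[c [Sc Hc]]|[r [Rr Hr]]].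
    left; exists (upd c j x1); split; last by rewrite /upd eqxx.
    by apply: suf_ext => //; rewrite a1 a2 eq_sym Hc.
  left; exists (upd r j x2); split; last by rewrite /upd eqxx.
  by apply: suf_ext => //; [exact: rig_suf | rewrite b1 b2 Hr eq_sym h12].
have [w1 w2 w3 [w4 w5 w6]] := dist4E hw.
case: (IH w) => [[c [Sc Hc]]|[r [Rr Hr]]].
  left; exists (upd c j w); split; last by rewrite /upd eqxx eq_sym.
  by apply: suf_ext => //; rewrite eq_sym w3 eq_sym w5 eq_sym Hc.
right; exists (upd r j z); split; last by rewrite /upd eqxx.
by apply: rig_ext => //; rewrite Hr.
Qed.

Theorem lemma7 (l : nat) : 3 <= l -> ck_diam_le 3 l (2 * l - 1).
Proof.
case: l => [|[|n]] // Hn A B VA VB.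
have n0 : 0 < n by lia.
set aa := fun i => nth ord0 A i.
set bb := fun i => nth ord0 B i.
have [H1a H2a] := vtx VA.
have [H1b H2b] := vtx VB.
rewrite /= in H2a H2b.
case: (chain aa bb (leqnn n.+1) (aa n.+1)); rewrite subnn.
- move=> [c [[Sc Ec] Hc0]].
  set m := n.+2 + n.+1.
  pose f p := if p < n.+2 then aa p else if p < m then c (p - n.+2) else bb (p - m).
  have fA p : p < n.+2 -> f p = aa p by move=> h; rewrite /f h.
  have fC p : n.+2 <= p -> p < m -> f p = c (p - n.+2).
    by move=> h1 h2; rewrite /f ifF ?h2 //; lia.
  have fB p : m <= p -> f p = bb (p - m).
    by move=> h; rewrite /f ifF ?ifF //; lia.
  have W := @walk n.+2 f m isT.
  rewrite (@Wt_eq _ f 0 A) in W; last by move=> i hi; rewrite add0n fA.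
  rewrite (@Wt_eq _ f m B) in W; last by move=> i hi; rewrite fB ?addKn //; lia.
  have -> : 2 * n.+2 - 1 = m by rewrite /m; lia.
  apply: W.
  + move=> p hp.
    case: (ltnP p.+1 n.+2) => h1.
      rewrite (fA p ltac:(lia)) (fA p.+1 h1); exact: H1a.
    case: (ltnP p n.+2) => h2.
      have -> : p = n.+1 by lia.
      rewrite (fA n.+1 ltac:(lia)) (fC n.+2 ltac:(lia) ltac:(lia)) subnn eq_sym //.
    case: (ltnP p.+1 m) => h3.
      rewrite (fC p ltac:(lia) ltac:(lia)) (fC p.+1 ltac:(lia) ltac:(lia)).
      have -> : p.+1 - n.+2 = (p - n.+2).+1 by lia.
      by have /and3P[_ _ ->] := Sc (p - n.+2) ltac:(lia).
    case: (ltnP p m) => h4.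
      rewrite (fC p ltac:(lia) ltac:(lia)) (fB p.+1 ltac:(lia)).
      have -> : p - n.+2 = n by lia.
      have -> : p.+1 - m = 0 by lia.
      rewrite -Ec; by have /and3P[_ _ ->] := Sc n ltac:(lia).
    rewrite (fB p ltac:(lia)) (fB p.+1 ltac:(lia)).
    have -> : p.+1 - m = (p - m).+1 by lia.
    apply: H1b; lia.
  + move=> s hs /=.
    case: (posnP s) => [->|s0].
      by rewrite (fA 0 isT) (fA n.+1 ltac:(lia)).
    case: (ltnP s n.+2) => h1.
      rewrite (fA s h1) (fC (s + n.+1) ltac:(lia) ltac:(lia)).
      have -> : s + n.+1 - n.+2 = s.-1 by lia.
      have /and3P[H _ _] := Sc s.-1 ltac:(lia).
      by rewrite prednK // eq_sym in H.
    case: (ltnP s m) => h2.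
      rewrite (fC s h1 h2) (fB (s + n.+1) ltac:(lia)).
      have -> : s + n.+1 - m = s - n.+2 by lia.
      by have /and3P[_ -> _] := Sc (s - n.+2) ltac:(lia).
    rewrite (fB s h2) (fB (s + n.+1) ltac:(lia)).
    have -> : s - m = 0 by lia.
    have -> : s + n.+1 - m = n.+1 by lia.
    exact: H2b.
- move=> [r [[Rr Er] Hr0]].
  set m := n.+2 + n.
  pose f p := if p < n.+2 then aa p else if p < m then r (p - n.+2).+1 else bb (p - m).
  have fA p : p < n.+2 -> f p = aa p by move=> h; rewrite /f h.
  have fC p : n.+2 <= p -> p < m -> f p = r (p - n.+2).+1.
    by move=> h1 h2; rewrite /f ifF ?h2 //; lia.
  have fB p : m <= p -> f p = bb (p - m).
    by move=> h; rewrite /f ifF ?ifF //; lia.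
  have W := @walk n.+2 f m isT.
  rewrite (@Wt_eq _ f 0 A) in W; last by move=> i hi; rewrite add0n fA.
  rewrite (@Wt_eq _ f m B) in W; last by move=> i hi; rewrite fB ?addKn //; lia.
  apply: (dist_mono (m := m)); first by rewrite /m; lia.
  apply: W.
  + move=> p hp.
    case: (ltnP p.+1 n.+2) => h1.
      rewrite (fA p ltac:(lia)) (fA p.+1 h1); exact: H1a.
    case: (ltnP p n.+2) => h2.
      have -> : p = n.+1 by lia.
      rewrite (fA n.+1 ltac:(lia)) (fC n.+2 ltac:(lia) ltac:(lia)) subnn -Hr0.
      by have [_ _ _ [_ _ ->]] := dist4E (Rr 0 ltac:(lia)).
    case: (ltnP p.+1 m) => h3.
      rewrite (fC p ltac:(lia) ltac:(lia)) (fC p.+1 ltac:(lia) ltac:(lia)).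
      have -> : p.+1 - n.+2 = (p - n.+2).+1 by lia.
      by have [_ _ _ [_ _ ->]] := dist4E (Rr (p - n.+2).+1 ltac:(lia)).
    case: (ltnP p m) => h4.
      rewrite (fC p ltac:(lia) ltac:(lia)) (fB p.+1 ltac:(lia)).
      have -> : (p - n.+2).+1 = n by lia.
      have -> : p.+1 - m = 0 by lia.
      rewrite -Er; by have [_ _ _ [_ _ ->]] := dist4E (Rr n ltac:(lia)).
    rewrite (fB p ltac:(lia)) (fB p.+1 ltac:(lia)).
    have -> : p.+1 - m = (p - m).+1 by lia.
    apply: H1b; lia.
  + move=> s hs /=.
    case: (posnP s) => [->|s0].
      by rewrite (fA 0 isT) (fA n.+1 ltac:(lia)).
    case: (ltnP s n.+1) => h1.
      rewrite (fA s ltac:(lia)) (fC (s + n.+1) ltac:(lia) ltac:(lia)).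
      have -> : (s + n.+1 - n.+2).+1 = s by lia.
      have [_ _ H _] := dist4E (Rr s.-1 ltac:(lia)).
      by rewrite prednK in H.
    case: (ltnP s n.+2) => h1'.
      have -> : s = n.+1 by lia.
      rewrite (fA n.+1 ltac:(lia)) (fB (n.+1 + n.+1) ltac:(lia)).
      have -> : n.+1 + n.+1 - m = 0 by lia.
      rewrite -Hr0; have [_ _ _ [H _ _]] := dist4E (Rr 0 ltac:(lia)).
      by rewrite eq_sym.
    case: (ltnP s m) => h2.
      rewrite (fC s h1' h2) (fB (s + n.+1) ltac:(lia)).
      have -> : s + n.+1 - m = (s - n.+2).+1 by lia.
      have [_ _ _ [H _ _]] := dist4E (Rr (s - n.+2).+1 ltac:(lia)).
      by rewrite eq_sym.
    rewrite (fB s h2) (fB (s + n.+1) ltac:(lia)).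
    have -> : s - m = 0 by lia.
    have -> : s + n.+1 - m = n.+1 by lia.
    exact: H2b.
Qed.
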